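(* Let $L^{(2)}_N$ be the number of leaves of the $B$-tree of order $5$ (i.e. $m=2$) obtained by inserting the keys $\pi(1),\dots,\pi(N)$ successively into an empty tree, where $\pi$ is a uniformly random permutation in $S_N$. Then \[ \mathbb E\big(L^{(2)}_N\big)=\frac{10(N+1)}{37}+O\big(N^{-13/2}\big)\qquad (N\to\infty). \]
   Context: A $B$-tree of order $2m+1$ is a rooted plane search tree whose nodes contain pairwise distinct keys in increasing left-to-right order (a non-leaf node with $k$ keys has $k+1$ children), every non-root node has between $m$ and $2m$ keys, the root between $1$ and $2m$, and all leaves have equal depth. Insertion: place the new key in the appropriate leaf; whenever a node has $2m+1$ keys, split it, moving the median key up into the parent and forming two nodes from the $m$ smallest and the $m$ largest keys (creating a new one-key root if the root splits). *)

(* Defs.v *)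
From mathcomp Require Import all_boot all_fingroup.
From Stdlib Require Import Reals.

Set Implicit Arguments.
Unset Strict Implicit.
Unset Printing Implicit Defensive.

(* A B-tree node: its sorted list of keys and its list of children
   (empty list of children = leaf). The empty tree is [Node [::] [::]]. *)
Inductive btree := Node of seq nat & seq btree.

(* result of inserting into a subtree: either the subtree absorbed the key,
   or it split into (left, median, right). *)
Inductive ires := Fit of btree | Split of btree & nat & btree.

Definition insert_at (i x : nat) (s : seq nat) : seq nat :=
  take i s ++ x :: drop i s.

(* Build a node of a B-tree of order 2m+1; if it overflows (2m+1 keys),
   split it: the m smallest keys (with their m+1 children), the median,
   and the m largest keys (with their m+1 children). *)
Definition mk_node (m : nat) (ks : seq nat) (cs : seq btree) : ires :=
  if size ks == (2 * m).+1 then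
    Split (Node (take m ks) (take m.+1 cs)) (nth 0 ks m)
          (Node (drop m.+1 ks) (drop m.+1 cs))
  else Fit (Node ks cs).

Fixpoint ins (m x : nat) (t : btree) {struct t} : ires :=
  match t with
  | Node ks cs =>
    let i := count (fun k => k < x) ks in
    if cs is [::] then mk_node m (insert_at i x ks) [::]
    else
      let fix upd (j : nat) (cs : seq btree) {struct cs} : seq btree * option nat :=
        match cs with
        | [::] => ([::], None)
        | c :: cs' =>
          if j is j'.+1 then
            let (r, o) := upd j' cs' in (c :: r, o)
          else match ins m x c with
               | Fit c' => (c' :: cs', None)
               | Split l k r => (l :: r :: cs', Some k)
               end
        end in
      let (cs', o) := upd i cs in
      match o with
      | None => Fit (Node ks cs')
      | Some k => mk_node m (insert_at i k ks) cs'
      end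
  end.

Definition binsert (m x : nat) (t : btree) : btree :=
  match ins m x t with
  | Fit t' => t'
  | Split l k r => Node [:: k] [:: l; r]
  end.

Definition empty_btree : btree := Node [::] [::].

Definition build (m : nat) (s : seq nat) : btree :=
  foldl (fun t x => binsert m x t) empty_btree s.

Fixpoint nleaves (t : btree) : nat :=
  match t with
  | Node _ cs =>
    if cs is [::] then 1
    else (fix go (cs : seq btree) : nat :=
            match cs with [::] => 0 | c :: cs' => nleaves c + go cs' end) cs
  end.

(* the key sequence pi(1), ..., pi(N) for pi in S_N (values in {1..N}) *)
Definition perm_keys (N : nat) (p : 'S_N) : seq nat :=
  [seq (p i).+1 | i <- enum 'I_N].

Definition Lm (m N : nat) (p : 'S_N) : nat := nleaves (build m (perm_keys p)).

Definition ELm (m N : nat) : R :=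
  (INR (\sum_(p : 'S_N) Lm m p) / INR (N`!))%R.

(* Main.v *)
From Pilot Require Import Defs.
From mathcomp Require Import all_boot all_fingroup.
From Stdlib Require Import Reals Lia Lra.
From mathcomp Require Import zify.
Import Pilot.Defs.

Set Implicit Arguments.
Unset Strict Implicit.
Unset Printing Implicit Defensive.

Fixpoint lsz (t : btree) : seq nat :=
  match t with Node ks cs => if cs is [::] then [:: size ks] else flatten (map lsz cs) end.

Fixpoint ileave (ss : seq (seq nat)) (ks : seq nat) : seq nat :=
  match ss with
  | [::] => [::]
  | s :: ss' => s ++ (if ks is k :: ks' then k :: ileave ss' ks' else [::])
  end.

Fixpoint keys (t : btree) : seq nat :=
  match t with Node ks cs => if cs is [::] then ks else ileave (map keys cs) ks end.

Fixpoint wf (t : btree) : bool :=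
  match t with Node ks cs =>
    (size ks <= 4) && (if cs is [::] then true else (size cs == (size ks).+1) && all wf cs) end.

Definition bt_ind (P : btree -> Prop)
  (H : forall ks cs, (forall c, List.In c cs -> P c) -> P (Node ks cs)) : forall t, P t :=
  fix F t := match t with Node ks cs => H ks cs
    ((fix G (cs : seq btree) : forall c, List.In c cs -> P c :=
       match cs with
       | [::] => fun c (h : List.In c [::]) => match h with end
       | c0 :: cs' => fun c h => match h with
            | or_introl e => eq_ind c0 P (F c0) c e
            | or_intror h' => G cs' c h' end
       end) cs) end.

Definition upd (m x : nat) := fix upd (j : nat) (cs : seq btree) {struct cs} : seq btree * option nat :=
        match cs with
        | [::] => ([::], None)
        | c :: cs' =>
          if j is j'.+1 then
            let (r, o) := upd j' cs' in (c :: r, o)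
          else match ins m x c with
               | Fit c' => (c' :: cs', None)
               | Split l k r => (l :: r :: cs', Some k)
               end
        end.

Lemma ins_node m x ks cs : ins m x (Node ks cs) =
  if cs is [::] then mk_node m (insert_at (count (fun k => k < x) ks) x ks) [::]
  else let (cs', o) := upd m x (count (fun k => k < x) ks) cs in
      match o with
      | None => Fit (Node ks cs')
      | Some k => mk_node m (insert_at (count (fun k => k < x) ks) k ks) cs'
      end.
Proof. by case: cs. Qed.
Lemma size_insert_at i x (s : seq nat) : size (insert_at i x s) = (size s).+1.
Proof. by rewrite /insert_at size_cat /= addnS -size_cat cat_take_drop. Qed.

Lemma insert_at_catl i x (s1 s2 : seq nat) : i <= size s1 ->
  insert_at i x (s1 ++ s2) = insert_at i x s1 ++ s2.
Proof.
move=> h; rewrite /insert_at take_cat drop_cat; case: (ltnP i (size s1)) => h2.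
  by rewrite -catA.
have e : i = size s1 by apply/eqP; rewrite eqn_leq h h2.
by rewrite e subnn take0 drop0 take_size drop_size cats0 -catA.
Qed.

Lemma insert_at_catr i x (s1 s2 : seq nat) :
  insert_at (size s1 + i) x (s1 ++ s2) = s1 ++ insert_at i x s2.
Proof. rewrite /insert_at take_cat drop_cat ltnNge leq_addr /= addKn -catA. done. Qed.

Lemma perm_insert_at i x (s : seq nat) : perm_eq (insert_at i x s) (x :: s).
Proof.
have := perm_catCA (take i s) [:: x] (drop i s).
by rewrite /= cat_take_drop /insert_at => ->.
Qed.

Lemma count_lt_sorted x k (s : seq nat) : sorted ltn (k :: s) -> x <= k ->
  count (fun y => y < x) (k :: s) = 0.
Proof.
move=> hs hk; apply/eqP; rewrite -leqn0 leqNgt -has_count; apply/hasPn => y /=.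
rewrite inE => /orP [/eqP -> |hy]; first by rewrite -leqNgt.
move: hs; rewrite /= path_sortedE; last exact: ltn_trans.
by case/andP => /allP /(_ _ hy) hky _; rewrite -leqNgt; apply: leq_trans hk (ltnW hky).
Qed.

Lemma sorted_insert x (s : seq nat) : sorted ltn s -> x \notin s ->
  sorted ltn (insert_at (count (fun k => k < x) s) x s).
Proof.
elim: s => [|a s IH] //= hs.
rewrite inE negb_or => /andP [hxa hxs].
have hs' : sorted ltn s by move: hs; apply: path_sorted.
case: (ltnP a x) => hax /=.
- rewrite add0n -/(insert_at _ x s) path_sortedE; last exact: ltn_trans.
  rewrite IH // andbT (perm_all _ (perm_insert_at _ _ _)) /= hax /=.
  by move: hs; rewrite path_sortedE; [case/andP|exact: ltn_trans].
- rewrite add0n.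
  have -> : count (fun k => k < x) s = 0.
    by move: (@count_lt_sorted x a s hs hax) => /=; rewrite ltnNge hax.
  by rewrite /insert_at /= hs andbT ltn_neqAle hax hxa.
Qed.

Definition gaps (z : seq nat) := sumn (map S z).

Definition step (a : nat) : seq nat := if a == 4 then [:: 2; 2] else [:: a.+1].

Fixpoint model (r : nat) (z : seq nat) : seq nat :=
  match z with
  | [::] => [::]
  | a :: z' => if r <= a then step a ++ z' else a :: model (r - a.+1) z'
  end.

Lemma model_catl r z1 z2 : r < gaps z1 -> model r (z1 ++ z2) = model r z1 ++ z2.
Proof.
elim: z1 r => [|a z1 IH] r //= h.
case: ifP => hr; first by rewrite catA.
by rewrite IH //; move: h hr; rewrite /gaps /=; case: (ltnP a r) => // ? ? _; lia.
Qed.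

Lemma model_catr r z1 z2 : model (gaps z1 + r) (z1 ++ z2) = z1 ++ model r z2.
Proof.
elim: z1 r => [|a z1 IH] r /=; first by rewrite /gaps /= add0n.
rewrite /gaps /= -/(gaps z1) -addnA leqNgt ltnS leq_addr /=.
by rewrite addSn subSS addKn IH.
Qed.

Lemma lsz_node ks c cs : lsz (Node ks (c :: cs)) = flatten (map lsz (c :: cs)).
Proof. by []. Qed.
Lemma keys_node ks c cs : keys (Node ks (c :: cs)) = ileave (map keys (c :: cs)) ks.
Proof. by []. Qed.
Lemma wf_node ks c cs : wf (Node ks (c :: cs)) =
  (size ks <= 4) && ((size (c :: cs) == (size ks).+1) && all wf (c :: cs)).
Proof. by []. Qed.

Fixpoint nlsum (cs : seq btree) : nat :=
  match cs with [::] => 0 | c :: cs' => nleaves c + nlsum cs' end.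

Lemma nleaves_lsz t : nleaves t = size (lsz t).
Proof.
elim/bt_ind: t => ks cs IH.
case: cs IH => [|c cs] IH //.
have -> : nleaves (Node ks (c :: cs)) = nlsum (c :: cs) by [].
rewrite lsz_node.
elim: (c :: cs) IH => [|c' cs' IHl] IH' //=.
rewrite size_cat (IH' c' (List.in_eq _ _)).
by rewrite IHl // => c0 h; apply: IH'; apply: List.in_cons.
Qed.

Lemma lsz_le4 t : wf t -> all (fun a => a <= 4) (lsz t).
Proof.
elim/bt_ind: t => ks cs IH.
case: cs IH => [|c cs] IH; first by rewrite /= !andbT.
rewrite wf_node lsz_node => /andP [_ /andP [_ hw]].
elim: (c :: cs) IH hw => [|c' cs' IHl] IH' //=; move=> /andP [h1 h2].
rewrite all_cat (IH' c' (List.in_eq _ _) h1) /=.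
by apply: IHl => // c0 h; apply: IH'; apply: List.in_cons.
Qed.

Lemma size_ileave ss ks : size ss = (size ks).+1 ->
  size (ileave ss ks) = sumn (map size ss) + size ks.
Proof.
elim: ss ks => [|s ss IH] ks //= h.
case: ks h => [|k ks] /= h.
  by case: ss {IH} h => //= _; rewrite !addn0 cats0.
case: h => h; rewrite size_cat /= IH //; lia.
Qed.

Lemma gaps_cat z1 z2 : gaps (z1 ++ z2) = gaps z1 + gaps z2.
Proof. by rewrite /gaps map_cat sumn_cat. Qed.

Lemma gaps_flatten (l : seq btree) :
  gaps (flatten (map lsz l)) = sumn (map (fun c => gaps (lsz c)) l).
Proof. by elim: l => [|c l IH] //=; rewrite gaps_cat IH. Qed.

Lemma gaps_lsz t : wf t -> gaps (lsz t) = (size (keys t)).+1.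
Proof.
elim/bt_ind: t => ks cs IH.
case: cs IH => [|c cs] IH; first by rewrite /gaps /= addn0.
rewrite wf_node lsz_node keys_node => /andP [_ /andP [/eqP hs hw]].
rewrite size_ileave ?size_map //.
have : sumn (map (fun c => gaps (lsz c)) (c :: cs)) = sumn (map size (map keys (c :: cs))) + size (c :: cs).
  elim: (c :: cs) IH hw => [|c' cs' IHl] IH' //=; move=> /andP [h1 h2].
  rewrite (IH' c' (List.in_eq _ _) h1).
  rewrite IHl //; first by lia.
  by move=> c0 h; apply: IH'; apply: List.in_cons.
rewrite hs -addnS => <-.
by rewrite gaps_flatten.
Qed.

Lemma sorted_catP (s1 s2 : seq nat) : sorted ltn (s1 ++ s2) ->
  [/\ sorted ltn s1, sorted ltn s2 & allrel ltn s1 s2].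
Proof.
by rewrite !(sorted_pairwise ltn_trans) pairwise_cat => /and3P [h1 h2 h3].
Qed.

Lemma mem_ileave ss ks y : y \in ks -> size ss = (size ks).+1 -> y \in ileave ss ks.
Proof.
elim: ss ks => [|s ss IH] [|k ks] //= hy [hs].
rewrite mem_cat inE; move: hy; rewrite inE => /orP [->|hy]; first by rewrite orbT.
by rewrite IH ?orbT.
Qed.

Lemma count0_sub (p : pred nat) (s s' : seq nat) :
  {subset s <= s'} -> count p s' = 0 -> count p s = 0.
Proof.
move=> hsub /eqP; rewrite -leqn0 leqNgt -has_count => /hasPn h.
apply/eqP; rewrite -leqn0 leqNgt -has_count; apply/hasPn => y hy.
exact: h (hsub _ hy).
Qed.

Definition ispec (x : nat) (t : btree) : Prop :=
  wf t -> sorted ltn (keys t) -> x \notin keys t ->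
  let r := count (fun k => k < x) (keys t) in
  match ins 2 x t with
  | Fit t' => [/\ wf t', keys t' = insert_at r x (keys t) & lsz t' = model r (lsz t)]
  | Defs.Split l k r' => [/\ wf l, wf r', keys l ++ k :: keys r' = insert_at r x (keys t)
                          & lsz l ++ lsz r' = model r (lsz t)]
  end.

Lemma insert_at_catr1 r x k (s1 s2 : seq nat) :
  insert_at (size s1 + (true + r)) x (s1 ++ k :: s2) = s1 ++ k :: insert_at r x s2.
Proof.
have -> : s1 ++ k :: s2 = (s1 ++ [:: k]) ++ s2 by rewrite -catA.
have -> : size s1 + (true + r) = size (s1 ++ [:: k]) + r by rewrite size_cat /= addnA addn1.
by rewrite insert_at_catr -catA.
Qed.

Definition upd_concl x cs ks :=
  let r := count (fun k => k < x) (ileave (map keys cs) ks) in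
  let i := count (fun k => k < x) ks in
  match upd 2 x i cs with
  | (cs', None) => [/\ size cs' = size cs, all wf cs',
       ileave (map keys cs') ks = insert_at r x (ileave (map keys cs) ks)
     & flatten (map lsz cs') = model r (flatten (map lsz cs))]
  | (cs', Some k) => [/\ size cs' = (size cs).+1, all wf cs',
       ileave (map keys cs') (insert_at i k ks) = insert_at r x (ileave (map keys cs) ks)
     & flatten (map lsz cs') = model r (flatten (map lsz cs))]
  end.

Lemma upd_spec x cs ks : (forall c, List.In c cs -> ispec x c) ->
  size cs = (size ks).+1 -> all wf cs ->
  sorted ltn (ileave (map keys cs) ks) -> x \notin ileave (map keys cs) ks ->
  upd_concl x cs ks.
Proof.
elim: cs ks => [|c cs IH] ks // hsp hsz; rewrite [all wf _]/= => /andP [hwc hwcs].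
have hspc := hsp c (List.in_eq _ _).
case: ks hsz => [|k0 ks'] hsz.
- case: cs {IH hsp} hsz hwcs => // _ _.
  rewrite /upd_concl /= !cats0 => hsc hxc.
  have := hspc hwc hsc hxc; rewrite /=.
  case: (ins 2 x c) => [c'|l k r'].
  + by case=> hw' hk' hl'; split => //=; rewrite ?hw' ?cats0.
  + case=> hwl hwr hk' hl'; split => //=; first by rewrite hwl hwr.
      by rewrite cats0.
    by rewrite cats0.
- move: hsz => /= [hsz].
  rewrite [ileave _ _]/= => hsort; rewrite mem_cat negb_or => /andP [hxc hxT].
  case/sorted_catP: hsort => hsc hsT hrel.
  have hxr : x \notin ileave (map keys cs) ks'.
    by move: hxT; rewrite inE negb_or => /andP [].
  have hrest : sorted ltn (ileave (map keys cs) ks') by move: hsT => /=; apply: path_sorted.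
  case: (ltnP k0 x) => hkx.
  +
    have hi : count (fun k => k < x) (k0 :: ks') = (count (fun k => k < x) ks').+1.
      by rewrite /= hkx.
    rewrite /upd_concl hi /=.
    have hallc : count (fun k => k < x) (keys c) = size (keys c).
      apply/eqP; rewrite -all_count; apply/allP => y hy.
      have : y < k0 by move/allrelP: hrel => /(_ y k0 hy); rewrite inE eqxx; apply.
      by move=> hy0; apply: ltn_trans hy0 hkx.
    have IH' := IH ks' (fun c0 h => hsp c0 (List.in_cons _ _ _ h)) hsz hwcs hrest hxr.
    rewrite /upd_concl /= in IH'.
    rewrite count_cat /= hallc hkx.
    have ecat : forall s, keys c ++ k0 :: s = (keys c ++ [:: k0]) ++ s by move=> s; rewrite -catA.
    have sz1 : size (keys c) + (true + count (fun k => k < x) (ileave (map keys cs) ks'))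
       = size (keys c ++ [:: k0]) + count (fun k => k < x) (ileave (map keys cs) ks').
      by rewrite size_cat /= addnA.
    have gz : size (keys c) + (true + count (fun k => k < x) (ileave (map keys cs) ks'))
       = gaps (lsz c) + count (fun k => k < x) (ileave (map keys cs) ks').
      by rewrite gaps_lsz // addnA addn1.
    case: (upd 2 x (count (fun k => k < x) ks') cs) IH' => cs2 [k|] [hs2 hw2 hk2 hl2].
    * split => //=; first by rewrite hs2.
      - by rewrite hwc hw2.
      - by rewrite insert_at_catr1 -hk2.
      - by rewrite gz model_catr hl2.
    * split => //=; first by rewrite hs2.
      - by rewrite hwc hw2.
      - by rewrite insert_at_catr1 -hk2.
      - by rewrite gz model_catr hl2.
  +
    have hi0 : count (fun k => k < x) (k0 :: ks') = 0.
      rewrite /= ltnNge hkx add0n.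
      apply: (@count0_sub _ _ (k0 :: ileave (map keys cs) ks')).
        move=> y hy; rewrite inE mem_ileave ?orbT //.
        by rewrite size_map.
      exact: count_lt_sorted.
    have hT0 : count (fun k => k < x) (k0 :: ileave (map keys cs) ks') = 0.
      exact: count_lt_sorted.
    rewrite /upd_concl hi0 /=.
    rewrite count_cat hT0 addn0.
    have hr : count (fun k => k < x) (keys c) < gaps (lsz c).
      by rewrite gaps_lsz // ltnS count_size.
    have := hspc hwc hsc hxc; rewrite /=.
    case: (ins 2 x c) => [c'|l k r'].
    * case=> hw' hk' hl'; split => //=; first by rewrite hw'.
        by rewrite hk' insert_at_catl // count_size.
      by rewrite hl' model_catl.
    * case=> hwl hwr hk' hl'; split => //=; first by rewrite hwl hwr.
        by rewrite -cat_cons catA hk' insert_at_catl ?count_size.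
      by rewrite catA hl' model_catl.
Qed.

Lemma five : (2 * 2).+1 = 5. Proof. by []. Qed.

Lemma ins_spec x t : ispec x t.
Proof.
elim/bt_ind: t => ks cs IH.
case: cs IH => [|c cs] IH.
- rewrite /ispec /= andbT => hw hs hx.
  rewrite /mk_node size_insert_at five.
  have hr : count (fun k => k < x) ks <= size ks by apply: count_size.
  have [h4|h4] : size ks < 4 \/ size ks = 4 by move: hw; clear; lia.
  + have -> : ((size ks).+1 == 5) = false by apply/negbTE; rewrite eqSS; apply/eqP; lia.
    rewrite /= hr /step.
    have -> : (size ks == 4) = false by apply/negbTE/eqP; lia.
    split => //; rewrite size_insert_at //; lia.
  + rewrite h4 eqxx /= -h4 hr /step h4 /=.
    have := size_insert_at (count (fun k => k < x) ks) x ks.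
    move: (insert_at _ _ _) => ks'.
    rewrite h4.
    by case: ks' => [|a [|b [|c [|d [|e [|f l]]]]]] //=.
- rewrite /ispec wf_node keys_node lsz_node => /andP [hks /andP [/eqP hsz hwcs]] hs hx.
  rewrite ins_node.
  have U := upd_spec IH hsz hwcs hs hx.
  rewrite /upd_concl in U.
  case: (upd 2 x (count (fun k => k < x) ks) (c :: cs)) U => cs2 [k|] [hs2 hw2 hk2 hl2].
  + rewrite /mk_node size_insert_at five.
    have [h4|h4] : size ks < 4 \/ size ks = 4 by move: hks; clear; lia.
    * have -> : ((size ks).+1 == 5) = false by apply/negbTE; rewrite eqSS; apply/eqP; lia.
      case: cs2 hs2 hw2 hk2 hl2 => [|c2 cs2] // hs2 hw2 hk2 hl2.
      split => //.
      by rewrite wf_node size_insert_at hw2 andbT hs2 hsz eqxx; lia.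
    * rewrite h4 eqxx.
      have := size_insert_at (count (fun k => k < x) ks) k ks.
      move: hk2; move: (insert_at _ k ks) => ks' hk2.
      rewrite hsz h4 in hs2; rewrite h4.
      move=> hks'.
      case: ks' hks' hk2 => [|a [|b [|c0 [|d [|e [|f l]]]]]] // _ hk2.
      case: cs2 hs2 hw2 hk2 hl2 => [|c1 [|c2 [|c3 [|c4 [|c5 [|c6 [|c7 l]]]]]]] // _ hw2 hk2 hl2.
      case/andP: hw2 => w1 /andP [w2 /andP [w3 /andP [w4 /andP [w5 /andP [w6 _]]]]].
      split => //=.
      - by rewrite w1 w2 w3.
      - by rewrite w4 w5 w6.
      - by rewrite -hk2 /= !cats0; repeat rewrite -catA /=.
      - by rewrite -hl2 /= !cats0; repeat rewrite -catA /=.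
  + case: cs2 hs2 hw2 hk2 hl2 => [|c2 cs2] // hs2 hw2 hk2 hl2.
    split => //.
    by rewrite wf_node hw2 andbT hs2 hsz eqxx hks.
Qed.

Lemma build_rcons s x : build 2 (rcons s x) = binsert 2 x (build 2 s).
Proof. by rewrite /build foldl_rcons. Qed.

Lemma build_spec s : uniq s ->
  [/\ wf (build 2 s), sorted ltn (keys (build 2 s)) & perm_eq (keys (build 2 s)) s].
Proof.
elim/last_ind: s => [|s x IH]; first by [].
rewrite rcons_uniq => /andP [hx hu].
case: (IH hu) => hw hs hp.
have hxk : x \notin keys (build 2 s) by rewrite (perm_mem hp).
have := ins_spec hw hs hxk.
rewrite build_rcons /binsert /=.
have hperm : forall l, l = insert_at (count (fun k => k < x) (keys (build 2 s))) x (keys (build 2 s)) ->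
    sorted ltn l /\ perm_eq l (rcons s x).
  move=> l ->; split; first exact: sorted_insert.
  apply: perm_trans (perm_insert_at _ _ _) _.
  by rewrite perm_sym perm_rcons perm_cons perm_sym.
case: (ins 2 x _) => [t'|l k r].
- by case=> hw' hk' _; case: (hperm _ hk').
- case=> hwl hwr hk' _; rewrite /= hwl hwr cats0.
  by case: (hperm _ hk').
Qed.

Lemma lsz_build_rcons s x : uniq (rcons s x) ->
  lsz (build 2 (rcons s x)) = model (count (fun k => k < x) s) (lsz (build 2 s)).
Proof.
move=> hu; have := hu; rewrite rcons_uniq => /andP [hx hu'].
case: (build_spec hu') => hw hs hp.
have hxk : x \notin keys (build 2 s) by rewrite (perm_mem hp).
have hc : count (fun k => k < x) (keys (build 2 s)) = count (fun k => k < x) s.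
  by move/seq.permP: hp => ->.
have := ins_spec hw hs hxk.
rewrite build_rcons /binsert /= hc.
case: (ins 2 x _) => [t'|l k r].
- by case.
- by case=> _ _ _ <-; rewrite /= cats0.
Qed.

Lemma lsz_build_map f s : (forall a b, (f a < f b) = (a < b)) -> uniq s ->
  lsz (build 2 (map f s)) = lsz (build 2 s).
Proof.
move=> hf.
have finj : injective f.
  move=> a b e; case: (ltngtP a b) => // h.
    by move: (hf a b); rewrite h e ltnn.
  by move: (hf b a); rewrite h e ltnn.
elim/last_ind: s => [|s x IH] hu; first by [].
rewrite map_rcons !lsz_build_rcons //; last by rewrite -map_rcons (map_inj_uniq finj).
rewrite IH; last by move: hu; rewrite rcons_uniq => /andP [].
by rewrite count_map; congr model; apply: eq_count => y /=; rewrite hf.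
Qed.

Definition zq N (p : 'S_N) : seq nat := lsz (build 2 (perm_keys p)).

Lemma uniq_perm_keys N (p : 'S_N) : uniq (perm_keys p).
Proof.
rewrite /perm_keys map_inj_uniq ?enum_uniq // => i j /= [] e.
by apply: (@perm_inj _ p); apply: val_inj.
Qed.

Lemma size_perm_keys N (p : 'S_N) : size (perm_keys p) = N.
Proof. by rewrite /perm_keys size_map size_enum_ord. Qed.

Lemma perm_keys_iota N (p : 'S_N) : perm_eq (perm_keys p) (iota 1 N).
Proof.
apply: uniq_perm; [exact: uniq_perm_keys | exact: iota_uniq |] => y.
rewrite mem_iota add1n; apply/mapP/idP => [[i _ ->]|/andP [h1 h2]].
  by apply/andP; split => //; rewrite ltnS ltn_ord.
have hy : y.-1 < N by move: h1 h2; clear; lia.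
exists ((p^-1)%g (Ordinal hy)); first by rewrite mem_enum.
by rewrite permKV /=; move: h1; clear; lia.
Qed.

Lemma count_perm_keys N (p : 'S_N) v : v <= N ->
  count (fun k => k < v.+1) (perm_keys p) = v.
Proof.
move=> hv; move/seq.permP: (perm_keys_iota p) => ->.
have -> : N = v + (N - v) by move: hv; clear; lia.
rewrite iotaD count_cat.
have -> : count (fun k => k < v.+1) (iota 1 v) = v.
  rewrite -[RHS](size_iota 1 v); apply/eqP; rewrite -all_count; apply/allP => y.
  by rewrite mem_iota; clear; lia.
have -> : forall n, count (fun k => k < v.+1) (iota (1 + v) n) = 0.
  move=> n; apply/eqP; rewrite -leqn0 leqNgt -has_count; apply/hasPn => y.
  by rewrite mem_iota; clear; lia.
by rewrite addn0.
Qed.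

Lemma z_props N (p : 'S_N) : gaps (zq p) = N.+1 /\ all (fun a => a <= 4) (zq p).
Proof.
case: (build_spec (uniq_perm_keys p)) => hw hs hp.
split; last exact: lsz_le4.
by rewrite /zq gaps_lsz // (perm_size hp) size_perm_keys.
Qed.

Definition gfun N (q : 'S_N) (v : 'I_N.+1) (i : 'I_N.+1) : 'I_N.+1 :=
  if unlift ord_max i is Some j then lift v (q j) else v.

Lemma gfun_inj N (q : 'S_N) v : injective (gfun q v).
Proof.
move=> i i'; rewrite /gfun.
case: unliftP => [j ->|->]; case: unliftP => [j' ->|->] //.
- by move/lift_inj/perm_inj => ->.
- by move=> e; move: (neq_lift v (q j)); rewrite e eqxx.
- by move=> e; move: (neq_lift v (q j')); rewrite -e eqxx.
Qed.

Definition phi N (qv : 'S_N * 'I_N.+1) : 'S_N.+1 := perm (@gfun_inj N qv.1 qv.2).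

Lemma phi_inj N : injective (@phi N).
Proof.
move=> [q v] [q' v'] /= e.
have ev : v = v'.
  by move: (congr1 (fun s : 'S_N.+1 => s ord_max) e); rewrite /phi /= !permE /gfun unlift_none.
subst v'; congr pair; apply/permP => j.
move: (congr1 (fun s : 'S_N.+1 => s (lift ord_max j)) e); rewrite /phi /= !permE /gfun liftK.
exact: lift_inj.
Qed.

Lemma phi_bij N : bijective (@phi N).
Proof.
apply: inj_card_bij; first exact: phi_inj.
by rewrite card_prod !card_Sn card_ord factS mulnC.
Qed.

Lemma perm_keys_phi N (q : 'S_N) (v : 'I_N.+1) :
  perm_keys (phi (q, v)) = rcons (map (bump v.+1) (perm_keys q)) v.+1.
Proof.
rewrite /perm_keys enum_ordSr map_rcons -map_comp; congr rcons.
- rewrite -map_comp; apply: eq_map => j /=; rewrite /phi permE /gfun.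
  have -> : widen_ord (leqnSn N) j = lift ord_max j by apply: val_inj; rewrite /= /bump leqNgt ltn_ord.
  by rewrite liftK bumpS.
- by rewrite /phi permE /gfun unlift_none.
Qed.

Lemma bump_mono h a b : (bump h a < bump h b) = (a < b).
Proof. by rewrite /bump; case: (leqP h a); case: (leqP h b) => /= ? ?; apply/idP/idP; lia. Qed.

Lemma bump_lt h k : (bump h k < h) = (k < h).
Proof. by rewrite /bump; case: (leqP h k) => /= ?; apply/idP/idP; lia. Qed.

Lemma zq_phi N (q : 'S_N) (v : 'I_N.+1) : zq (phi (q, v)) = model v (zq q).
Proof.
rewrite /zq perm_keys_phi lsz_build_rcons.
- rewrite lsz_build_map; [|exact: bump_mono|exact: uniq_perm_keys].
  rewrite count_map (@eq_count _ _ (fun k => k < v.+1)); last by move=> y /=; rewrite bump_lt.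
  by rewrite count_perm_keys // -ltnS.
- rewrite rcons_uniq map_inj_uniq ?uniq_perm_keys ?andbT.
    apply/mapP => [[y _]]; rewrite /bump; case: (leqP v.+1 y) => /= ?; lia.
  move=> a b e; case: (ltngtP a b) => // h.
    by move: (bump_mono v.+1 a b); rewrite h e ltnn.
  by move: (bump_mono v.+1 b a); rewrite h e ltnn.
Qed.

Definition cnt j (z : seq nat) := count (pred1 j) z.

Definition S N j := \sum_(p : 'S_N) cnt j (zq p).

Lemma S_step N j :
  S N.+1 j = \sum_(q : 'S_N) \sum_(v < N.+1) cnt j (model v (zq q)).
Proof.
rewrite /S (reindex (@phi N)); last exact/onW_bij/phi_bij.
rewrite pair_big /=; apply: eq_bigr => [[q v]] _ /=.
by rewrite zq_phi.
Qed.

Lemma model_sum z j :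
  \sum_(0 <= v < gaps z) cnt j (model v z) + sumn [seq a.+1 * (a == j) | a <- z] =
  gaps z * cnt j z + sumn [seq a.+1 * cnt j (step a) | a <- z].
Proof.
elim: z => [|a z IH]; first by rewrite big_geq.
have eg : gaps (a :: z) = a.+1 + gaps z by [].
rewrite eg (@big_cat_nat _ _ _ a.+1) //=; last exact: leq_addr.
rewrite (@eq_big_nat _ _ _ 0 a.+1 _ (fun _ => cnt j (step a) + cnt j z)); last first.
  by move=> v /andP [_ hv]; rewrite /= -ltnS hv /cnt count_cat.
rewrite sum_nat_const_nat subn0.
rewrite -[X in \sum_(X <= _ < _) _]add0n big_addn addKn.
rewrite (@eq_big_nat _ _ _ 0 (gaps z) _ (fun v => (a == j) + cnt j (model v z))); last first.
  move=> v _ /=; have -> : (v + a.+1 <= a) = false by apply/negbTE; rewrite -ltnNge; lia.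
  rewrite addnK.
  by rewrite /cnt /= eq_sym.
rewrite big_split /= sum_nat_const_nat subn0.
have e2 : cnt j (a :: z) = (a == j) + cnt j z by rewrite /cnt /= eq_sym.

move: IH; set A := \sum_(0 <= v < gaps z) _; set B := sumn _; set C := sumn _.
move=> IH; nia.
Qed.

Lemma sumn_diag z j : sumn [seq a.+1 * (a == j) | a <- z] = j.+1 * cnt j z.
Proof.
elim: z => [|a z IH] /=; first by rewrite muln0.
rewrite IH /cnt /=; case: eqP => [->|_] /=; lia.
Qed.

Definition infl j z := match j with
  | 1 => cnt 0 z | 2 => 2 * cnt 1 z + 10 * cnt 4 z | 3 => 3 * cnt 2 z | 4 => 4 * cnt 3 z
  | _ => 0 end.

Lemma sumn_infl z j : all (fun a => a <= 4) z ->
  sumn [seq a.+1 * cnt j (step a) | a <- z] = infl j z.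
Proof.
elim: z => [|a z IH] /=; first by case: j => [|[|[|[|[|j]]]]].
case/andP => ha hz; rewrite IH // {IH hz}.
case: a ha => [|[|[|[|[|a]]]]] // _;
  case: j => [|[|[|[|[|j]]]]]; rewrite /infl /cnt /step /=; lia.
Qed.

Lemma size_cnt z : all (fun a => a <= 4) z ->
  size z = cnt 0 z + cnt 1 z + cnt 2 z + cnt 3 z + cnt 4 z.
Proof.
elim: z => [|a z IH] //= /andP [ha hz]; rewrite IH // /cnt /=.
case: a ha => [|[|[|[|[|a]]]]] // _ /=; lia.
Qed.

Lemma S_rec N j :
  S N.+1 j + j.+1 * S N j = N.+1 * S N j + \sum_(q : 'S_N) infl j (zq q).
Proof.
rewrite S_step /S !big_distrr -!big_split /=; apply: eq_bigr => q _.
case: (z_props q) => hg ha.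
rewrite -sumn_infl // -hg -model_sum -sumn_diag.
by rewrite big_mkord.
Qed.

Lemma sum_Lm N : \sum_(p : 'S_N) Lm 2 p = S N 0 + S N 1 + S N 2 + S N 3 + S N 4.
Proof.
rewrite /S -!big_split /=; apply: eq_bigr => p _.
case: (z_props p) => _ ha.
by rewrite /Lm nleaves_lsz -/(zq p) size_cnt.
Qed.

Lemma S0 j : S 0 j = cnt j [:: 0].
Proof.
rewrite /S (eq_bigr (fun _ => cnt j [:: 0])); last first.
  move=> p _; rewrite /zq.
  have -> : perm_keys p = [::] by apply/nilP; rewrite /nilp size_perm_keys.
  by [].
by rewrite sum_nat_const card_Sn mul1n.
Qed.

Lemma S_rec_all N :
  [/\ S N.+1 0 + 1 * S N 0 = N.+1 * S N 0 + 0,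
      S N.+1 1 + 2 * S N 1 = N.+1 * S N 1 + S N 0,
      S N.+1 2 + 3 * S N 2 = N.+1 * S N 2 + (2 * S N 1 + 10 * S N 4),
      S N.+1 3 + 4 * S N 3 = N.+1 * S N 3 + 3 * S N 2 &
      S N.+1 4 + 5 * S N 4 = N.+1 * S N 4 + 4 * S N 3].
Proof.
split; rewrite S_rec; congr addn; rewrite /infl /S.
- by rewrite big1.
- by rewrite big_split /= -!big_distrr.
- by rewrite -big_distrr.
- by rewrite -big_distrr.
Qed.

Open Scope R_scope.

Definition E N j : R := INR (S N j) / INR (N`!).
Arguments E (N j)%_nat_scope.

Lemma fact_pos N : 0 < INR (N`!).
Proof. apply: lt_0_INR; apply/ltP; exact: fact_gt0. Qed.

Lemma rec_real (N a b c k : nat) : (a + k * b = N.+1 * b + c)%nat ->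
  INR a / INR (N.+1)`! = INR b / INR N`! + (INR c / INR N`! - INR k * (INR b / INR N`!)) / INR N.+1.
Proof.
rewrite factS mult_INR.
move=> /(congr1 INR) h; rewrite !plus_INR !mult_INR in h.
have hf := fact_pos N.
have hn : 0 < INR N.+1 by apply: lt_0_INR; apply/ltP.
rewrite S_INR in hn *.
have ha : INR a = INR b + INR N * INR b + INR c - INR k * INR b by lra.
rewrite ha; field; lra.
Qed.

Lemma E_rec N :
  [/\ E N.+1 0 = E N 0 + (0 - 1 * E N 0) / INR N.+1,
      E N.+1 1 = E N 1 + (E N 0 - 2 * E N 1) / INR N.+1,
      E N.+1 2 = E N 2 + (2 * E N 1 + 10 * E N 4 - 3 * E N 2) / INR N.+1,
      E N.+1 3 = E N 3 + (3 * E N 2 - 4 * E N 3) / INR N.+1 &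
      E N.+1 4 = E N 4 + (4 * E N 3 - 5 * E N 4) / INR N.+1].
Proof.
have hf := fact_pos N.
have hn : 0 < INR N.+1 by apply: lt_0_INR; apply/ltP.
case: (S_rec_all N) => h0 h1 h2 h3 h4.
rewrite /E (rec_real h0) (rec_real h1) (rec_real h2) (rec_real h3) (rec_real h4).
rewrite ?plus_INR ?mult_INR !S_INR /=.
rewrite S_INR in hn.
split; field; lra.
Qed.

Lemma E0 : [/\ E 0 0 = 1, E 0 1 = 0, E 0 2 = 0, E 0 3 = 0 & E 0 4 = 0].
Proof. by rewrite /E !S0 /=; split; field. Qed.

Lemma E2 : [/\ E 2 0 = 0, E 2 1 = 0, E 2 2 = 1, E 2 3 = 0 & E 2 4 = 0].
Proof.
case: (E_rec 1) => a0 a1 a2 a3 a4.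
case: (E_rec 0) => b0 b1 b2 b3 b4.
case: E0 => c0 c1 c2 c3 c4.
rewrite a0 a1 a2 a3 a4 b0 b1 b2 b3 b4 c0 c1 c2 c3 c4 /=.
split; field.
Qed.

Lemma E01 n : E (n + 2)%nat 0 = 0 /\ E (n + 2)%nat 1 = 0.
Proof.
elim: n => [|n [IH0 IH1]]; first by case: E2.
have hn : 0 < INR (n + 2)%nat.+1 by apply: lt_0_INR; apply/ltP.
rewrite addSn; case: (E_rec (n + 2)) => a0 a1 _ _ _.
rewrite a0 a1 IH0 IH1; split; field; lra.
Qed.

Lemma E_inv n : 3 * E (n + 2) 2 + 4 * E (n + 2) 3 + 5 * E (n + 2) 4 = INR (n + 2) + 1.
Proof.
elim: n => [|n IH].
  by case: E2 => _ _ -> -> ->; rewrite /=; lra.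
have hK : 0 < INR (n + 2) + 1 by have := pos_INR (n + 2); lra.
rewrite addSn; case: (E_rec (n + 2)) => _ _ a2 a3 a4.
case: (E01 n) => _ e1.
rewrite a2 a3 a4 e1 !S_INR.
have ew : E (n + 2) 4 = (INR (n + 2) + 1 - 3 * E (n + 2) 2 - 4 * E (n + 2) 3) / 5 by lra.
rewrite ew; field; lra.
Qed.

Definition Qf (a b : R) := 3 * (a * a) + 5 * (a * b) + 8 * (b * b).

Definition Q n := Qf (E (n + 2) 2 - 5 * (INR (n + 2) + 1) / 37)
                     (E (n + 2) 3 - 3 * (INR (n + 2) + 1) / 37).

Lemma Qf_ge0 a b : 0 <= Qf a b.
Proof. rewrite /Qf; nra. Qed.

Lemma Q_rec n : Q n.+1 =
  (1 - 13 / (INR (n + 2) + 1) + 60 / ((INR (n + 2) + 1) * (INR (n + 2) + 1))) * Q n.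
Proof.
have hK : 0 < INR (n + 2) + 1 by have := pos_INR (n + 2); lra.
rewrite /Q addSn; case: (E_rec (n + 2)) => _ _ a2 a3 _.
case: (E01 n) => _ e1.
have hi := E_inv n.
rewrite a2 a3 e1 !S_INR.
have ew : E (n + 2) 4 = (INR (n + 2) + 1 - 3 * E (n + 2) 2 - 4 * E (n + 2) 3) / 5 by lra.
rewrite ew /Qf; field; lra.
Qed.

Definition P (t : R) := (t - 4) * ((t - 3) * ((t - 2) * ((t - 1) * (t * ((t - 4) * ((t - 3) *
  ((t - 2) * ((t - 1) * (t * ((t + 1) * ((t + 2) * (t + 3)))))))))))).

Lemma P_shift t : P (t + 1) * ((t - 4) * (t - 4)) = P t * (t + 1) * (t + 4).
Proof. rewrite /P; ring. Qed.

Lemma P_pos t : 44 <= t -> 0 < P t.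
Proof. move=> h; rewrite /P; repeat apply: Rmult_lt_0_compat; lra. Qed.

Lemma rho_le t p0 p1 : 44 <= t -> 0 <= p0 -> p1 * ((t - 4) * (t - 4)) = p0 * (t + 1) * (t + 4) ->
  (1 - 13 / (t + 1) + 60 / ((t + 1) * (t + 1))) * p1 <= p0.
Proof.
move=> ht hp0 hp.
have hk : 0 < t + 1 by lra.
have hd : 0 < (t + 1) * (t + 1) * ((t - 4) * (t - 4)) by apply: Rmult_lt_0_compat; nra.
apply: (Rmult_le_reg_r _ _ _ hd).
have -> : (1 - 13 / (t + 1) + 60 / ((t + 1) * (t + 1))) * p1 * ((t + 1) * (t + 1) * ((t - 4) * (t - 4)))
   = ((t + 1) * (t + 1) - 13 * (t + 1) + 60) * (p1 * ((t - 4) * (t - 4))) by field; lra.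
rewrite hp.
have e : p0 * ((t + 1) * (t + 1) * ((t - 4) * (t - 4))) -
         ((t + 1) * (t + 1) - 13 * (t + 1) + 60) * (p0 * (t + 1) * (t + 4))
         = p0 * (t + 1) * (4 * (t + 1) - 180) by ring.
have : 0 <= p0 * (t + 1) * (4 * (t + 1) - 180).
  apply: Rmult_le_pos; [apply: Rmult_le_pos|]; lra.
lra.
Qed.

Lemma INR44 : INR 44 = 44.
Proof. by rewrite INR_IZR_INZ. Qed.

Lemma Q_bound m : Q (m + 42) * P (INR (m + 44)) <= Q 42 * P (INR 44).
Proof.
elim: m => [|m IH]; first by rewrite !add0n; lra.
have ht : 44 <= INR (m + 44) by rewrite plus_INR INR44; have := pos_INR m; lra.
have -> : (m.+1 + 42 = (m + 42).+1)%nat by rewrite addSn.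
have -> : (m.+1 + 44 = (m + 44).+1)%nat by rewrite addSn.
rewrite Q_rec S_INR.
have -> : INR (m + 42 + 2) = INR (m + 44) by congr INR; rewrite -addnA.
have hP := rho_le ht (Rlt_le _ _ (P_pos ht)) (P_shift (INR (m + 44))).
have hQ : 0 <= Q (m + 42) by apply: Qf_ge0.
apply: Rle_trans IH.
have -> : (1 - 13 / (INR (m + 44) + 1) + 60 / ((INR (m + 44) + 1) * (INR (m + 44) + 1))) *
   Q (m + 42) * P (INR (m + 44) + 1) =
   Q (m + 42) * ((1 - 13 / (INR (m + 44) + 1) + 60 / ((INR (m + 44) + 1) * (INR (m + 44) + 1))) *
    P (INR (m + 44) + 1)) by ring.
by apply: Rmult_le_compat_l.
Qed.

Lemma P_lower t : 44 <= t -> (t / 2) ^ 13 <= P t.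
Proof.
move=> h; rewrite /P /=.
repeat (apply: Rmult_le_compat; [lra | repeat apply: Rmult_le_pos; lra | lra | ]).
lra.
Qed.

Lemma ELm_E N : ELm 2 N = E N 0 + E N 1 + E N 2 + E N 3 + E N 4.
Proof.
have hf := fact_pos N.
rewrite /ELm sum_Lm !plus_INR /E; field; lra.
Qed.

Lemma rpow_sq (t : R) : 0 < t -> Rpower t (- (13 / 2)) * Rpower t (- (13 / 2)) = / t ^ 13.
Proof.
move=> ht; rewrite -Rpower_plus.
have -> : - (13 / 2) + - (13 / 2) = - INR 13 by rewrite INR_IZR_INZ /=; field.
by rewrite Rpower_Ropp Rpower_pow.
Qed.

Theorem mainTheorem11 :
  exists C : R, exists N0 : nat, forall N : nat, (N0 <= N)%coq_nat ->
    (Rabs (ELm 2 N - 10 * (INR N + 1) / 37) <= C * Rpower (INR N) (- (13 / 2)))%R.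
Proof.
set K0 := Q 42 * P (INR 44).
have hK0 : 0 <= K0.
  rewrite /K0; apply: Rmult_le_pos; first exact: Qf_ge0.
  by apply: Rlt_le; apply: P_pos; rewrite INR44; lra.
exists (K0 * 2 ^ 13 + 1), 44%nat => N hN.
have [m em] : exists m, N = (m + 44)%nat by exists (N - 44)%nat; lia.
subst N.
set t := INR (m + 44).
have ht : 44 <= t by rewrite /t plus_INR INR44; have := pos_INR m; lra.
have hPp := P_pos ht.
have hQP := Q_bound m.
have hn : (m + 44 = (m + 42) + 2)%nat by rewrite -addnA.
set x := E (m + 44) 2; set y := E (m + 44) 3; set w := E (m + 44) 4.
have hinv : 3 * x + 4 * y + 5 * w = t + 1.
  by rewrite /x /y /w /t hn; apply: E_inv.
have [e0 e1] : E (m + 44) 0 = 0 /\ E (m + 44) 1 = 0 by rewrite hn; apply: E01.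
have hQ : Q (m + 42) = Qf (x - 5 * (t + 1) / 37) (y - 3 * (t + 1) / 37).
  by rewrite /Q /x /y /t hn.
set a := x - 5 * (t + 1) / 37; set b := y - 3 * (t + 1) / 37.
set err := ELm 2 (m + 44) - 10 * (INR (m + 44) + 1) / 37.
have herr : err = (2 * a + b) / 5.
  rewrite /err ELm_E e0 e1 -/x -/y -/w -/t /a /b.
  have ew : w = (t + 1 - 3 * x - 4 * y) / 5 by lra.
  rewrite ew; field.
have hsq : err * err <= Qf a b.
  rewrite herr /Qf; nra.
have hQle : Qf a b * P t <= K0 by rewrite -hQ.
set r := Rpower t (- (13 / 2)).
have hr0 : 0 < r by rewrite /r /Rpower; apply: exp_pos.
have hrr : r * r = / t ^ 13 by apply: rpow_sq; lra.
have ht13 : 0 < t ^ 13 by apply: pow_lt; lra.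
have hlow := P_lower ht.
have hlow' : t ^ 13 <= 2 ^ 13 * P t.
  have -> : t ^ 13 = 2 ^ 13 * (t / 2) ^ 13 by rewrite -Rpow_mult_distr; congr pow; field.
  apply: Rmult_le_compat_l => //; apply: pow_le; lra.
have hQb : Qf a b * t ^ 13 <= K0 * 2 ^ 13.
  have hq := Qf_ge0 a b.
  have : Qf a b * t ^ 13 <= Qf a b * (2 ^ 13 * P t) by apply: Rmult_le_compat_l.
  have : Qf a b * (2 ^ 13 * P t) = 2 ^ 13 * (Qf a b * P t) by ring.
  have h213 : 0 < 2 ^ 13 by apply: pow_lt; lra.
  nra.
have hsq2 : err * err <= K0 * 2 ^ 13 * (r * r).
  rewrite hrr.
  apply: (Rmult_le_reg_r _ _ _ ht13).
  have -> : K0 * 2 ^ 13 * / t ^ 13 * t ^ 13 = K0 * 2 ^ 13 by field; lra.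
  have : err * err * t ^ 13 <= Qf a b * t ^ 13 by apply: Rmult_le_compat_r; lra.
  lra.
set C := K0 * 2 ^ 13 + 1.
have hC : 0 <= K0 * 2 ^ 13 by apply: Rmult_le_pos => //; apply: pow_le; lra.
rewrite -/err -/r.
apply: Rnot_lt_le => hlt.
have hcr : 0 <= C * r by rewrite /C; apply: Rmult_le_pos; lra.
have h1 : (C * r) * (C * r) < Rabs err * Rabs err by apply: Rmult_le_0_lt_compat.
rewrite -Rabs_mult Rabs_right in h1; last by apply: Rle_ge; nra.
have : K0 * 2 ^ 13 * (r * r) <= C * r * (C * r).
  have -> : C * r * (C * r) = C * C * (r * r) by ring.
  apply: Rmult_le_compat_r; first nra.
  rewrite /C; nra.
lra.
Qed.
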